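(* Any sequential component with interface $(N,I,O)$ is distributed, i.e. the net $N$ is distributed.
   Context: A Petri net $N=(S,T,F,M_0,\ell)$ has disjoint $S,T$, $F:(S\times T)\cup(T\times S)\to\mathbb N$, $M_0\in\mathbb N^S$, labels $\ell$. ${}^\bullet x(y)=F(y,x)$, $x^\bullet(y)=F(x,y)$ (multisets). For a finite nonempty multiset $G$ of transitions, $M[G\rangle M'$ iff ${}^\bullet G\le M$ and $M'=M-{}^\bullet G+G^\bullet$; reachable markings are those obtained from $M_0$ by steps; $t\smile u$ iff $M[\{t\}+\{u\}\rangle$ for some reachable $M$. A component with interface is $(N,I,O)$ with $I,O\subseteq S$, $I\cap O=\emptyset$, and $o^\bullet=\emptyset$ for all $o\in O$. It is sequential iff there is $Q\subseteq S\setminus(I\cup O)$ such that every $t\in T$ satisfies $|{}^\bullet t\restriction Q|=1$ and $|t^\bullet\restriction Q|=1$, and $|M_0\restriction Q|=1$ (sizes counted with multiplicity). $N$ is distributed iff there is a function $D$ on $S\cup T$ with (1) $s\in{}^\bullet t\Rightarrow D(t)=D(s)$ and (2) $t\smile u\Rightarrow D(t)\ne D(u)$. *)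

(* Defs.v *)
(* Petri nets with arbitrary (possibly infinite) sets of places
   and transitions; finite multisets of transitions are represented by lists
   (multiplicity = number of occurrences). *)
From Stdlib Require Import List Arith.
Import ListNotations.

Record PetriNet := {
  place : Type;
  trans : Type;
  Fpre  : place -> trans -> nat;
  Fpost : trans -> place -> nat;
  M0    : place -> nat;
  Act   : Type;
  label : trans -> Act
}.

Definition marking (N : PetriNet) := place N -> nat.

Definition preG (N : PetriNet) (G : list (trans N)) (s : place N) : nat :=
  fold_right Nat.add 0 (map (fun t => Fpre N s t) G).
Definition postG (N : PetriNet) (G : list (trans N)) (s : place N) : nat :=
  fold_right Nat.add 0 (map (fun t => Fpost N t s) G).

Definition step (N : PetriNet) (M : marking N) (G : list (trans N)) (M' : marking N) : Prop :=
  G <> [] /\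
  (forall s, preG N G s <= M s) /\
  (forall s, M' s = M s - preG N G s + postG N G s).

Definition enabled (N : PetriNet) (M : marking N) (G : list (trans N)) : Prop :=
  exists M', step N M G M'.

Inductive reachable (N : PetriNet) : marking N -> Prop :=
| reach_init : reachable N (M0 N)
| reach_step : forall M G M', reachable N M -> step N M G M' -> reachable N M'.

Definition concurrent (N : PetriNet) (t u : trans N) : Prop :=
  exists M, reachable N M /\ enabled N M [t; u].

Definition size1_on (N : PetriNet) (Q : place N -> Prop) (m : place N -> nat) : Prop :=
  exists s0, Q s0 /\ m s0 = 1 /\ (forall s, Q s -> s <> s0 -> m s = 0).

Definition is_component (N : PetriNet) (I O : place N -> Prop) : Prop :=
  (forall s, I s -> O s -> False) /\
  (forall o t, O o -> Fpre N o t = 0).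

Definition sequential (N : PetriNet) (I O : place N -> Prop) : Prop :=
  exists Q : place N -> Prop,
    (forall s, Q s -> ~ I s /\ ~ O s) /\
    (forall t, size1_on N Q (fun s => Fpre N s t)) /\
    (forall t, size1_on N Q (fun s => Fpost N t s)) /\
    size1_on N Q (M0 N).

Definition distributed (N : PetriNet) : Prop :=
  exists (L : Type) (D : place N + trans N -> L),
    (forall s t, Fpre N s t <> 0 -> D (inr t) = D (inl s)) /\
    (forall t u, concurrent N t u -> D (inr t) <> D (inr u)).

(* Main.v *)
Require Import Defs.
From Stdlib Require Import List Arith Lia Classical.
Import ListNotations.

Lemma preG_cons2 (N : PetriNet) t u r s :
  Fpre N s t + Fpre N s u <= preG N (t :: u :: r) s.
Proof. unfold preG; simpl; lia. Qed.

Lemma pos_is (N : PetriNet) (Q : place N -> Prop) (M : place N -> nat) s0 s :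
  (forall s, Q s -> s <> s0 -> M s = 0) -> Q s -> 1 <= M s -> s = s0.
Proof.
  intros H Hq H1. apply NNPP; intro n. rewrite (H s Hq n) in H1. lia.
Qed.

Lemma no_two (N : PetriNet) (Q : place N -> Prop) M t u r :
  (forall t, size1_on N Q (fun s => Fpre N s t)) ->
  size1_on N Q M ->
  (forall s, preG N (t :: u :: r) s <= M s) -> False.
Proof.
  intros Hpre [s0 [Hq0 [Hm0 Hm]]] Hle.
  destruct (Hpre t) as [st [Hqt [Ht _]]].
  destruct (Hpre u) as [su [Hqu [Hu _]]].
  pose proof (Hle st) as A. pose proof (preG_cons2 N t u r st) as B.
  pose proof (Hle su) as C. pose proof (preG_cons2 N t u r su) as D.
  simpl in *.
  assert (st = s0) by (apply (pos_is N Q M s0 st Hm Hqt); lia).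
  assert (su = s0) by (apply (pos_is N Q M s0 su Hm Hqu); lia).
  subst. lia.
Qed.

Lemma inv (N : PetriNet) (Q : place N -> Prop) :
  (forall t, size1_on N Q (fun s => Fpre N s t)) ->
  (forall t, size1_on N Q (fun s => Fpost N t s)) ->
  size1_on N Q (M0 N) ->
  forall M, reachable N M -> size1_on N Q M.
Proof.
  intros Hpre Hpost H0 M HR. induction HR as [|M G M' HR IH [Hne [Hle Heq]]]; auto.
  destruct G as [|t [|u r]]; [congruence| |exfalso; exact (no_two N Q M t u r Hpre IH Hle)].
  destruct IH as [s0 [Hq0 [Hm0 Hm]]].
  destruct (Hpre t) as [st [Hqt [Ht Ht0]]].
  destruct (Hpost t) as [sp [Hqp [Hp Hp0]]].
  assert (Est : st = s0).
  { apply (pos_is N Q M s0 st Hm Hqt). specialize (Hle st). unfold preG in Hle; simpl in Hle; lia. }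
  subst st.
  exists sp. split; [exact Hqp|]. split.
  - rewrite Heq. unfold preG, postG; simpl.
    destruct (classic (sp = s0)) as [->|n].
    + rewrite Hm0, Ht. simpl in Hp. lia.
    + rewrite (Hm sp Hqp n), (Ht0 sp Hqp n). simpl in Hp. lia.
  - intros s Hs n. rewrite Heq. unfold preG, postG; simpl.
    rewrite (Hp0 s Hs n).
    destruct (classic (s = s0)) as [->|n'].
    + rewrite Hm0, Ht. lia.
    + rewrite (Hm s Hs n'). lia.
Qed.

Theorem lemma4p11 (N : PetriNet) (I O : place N -> Prop) :
  is_component N I O -> sequential N I O -> distributed N.
Proof.
  intros _ [Q [_ [Hpre [Hpost H0]]]].
  exists unit, (fun _ => tt). split; [reflexivity|].
  intros t u [M [HR [M' [_ [Hle _]]]]]. exfalso.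
  exact (no_two N Q M t u [] Hpre (inv N Q Hpre Hpost H0 M HR) Hle).
Qed.
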